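(* Let $s\ge2$ be an integer and $\psi_s(z):=z^{s-1}(z+s)-(s-1)^{s-1}$. Every complex root $\alpha$ of $\psi_s$ other than its unique negative real root satisfies $|\alpha|<s-1$.
   Context: The negative real root of $\psi_s$ is unique: it is $1-s$ when $s$ is odd and lies in $(-s-1,1-s)$ when $s$ is even. *)

(* Defs.v *)
From HB Require Import structures.
From mathcomp Require Import all_boot all_order all_algebra.
From mathcomp Require Import complex.
Set Implicit Arguments. Unset Strict Implicit. Unset Printing Implicit Defensive.
Import Order.TTheory GRing.Theory Num.Theory.
Local Open Scope ring_scope.

Definition psi (C : nzRingType) (s : nat) (z : C) : C :=
  z ^+ (s.-1) * (z + s%:R) - (s.-1)%:R ^+ (s.-1).

(* Main.v *)
Require Import Defs.
From HB Require Import structures.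
From mathcomp Require Import all_boot all_order all_algebra.
From mathcomp Require Import complex ring lra.
Import Order.TTheory GRing.Theory Num.Theory.
Local Open Scope ring_scope.
Local Notation Rec := complex.Re.
Local Notation Imc := complex.Im.
Section S.
Variable R : rcfType.
Lemma ReIm_S (x y : R) n :
  Rec ((Complex x y) ^+ n.+1) = Rec ((Complex x y) ^+ n) * x - Imc ((Complex x y) ^+ n) * y /\
  Imc ((Complex x y) ^+ n.+1) = Rec ((Complex x y) ^+ n) * y + Imc ((Complex x y) ^+ n) * x.
Proof.
rewrite exprSr; case: ((Complex x y) ^+ n) => p q /=; split; ring.
Qed.
Lemma ReIm_nat n : Rec (n%:R : R[i]) = n%:R /\ Imc (n%:R : R[i]) = 0.
Proof.
elim: n => [|n [IH1 IH2]] //; rewrite mulrS; case: (n%:R : R[i]) IH1 IH2 => p q /= -> ->; rewrite addr0 mulrS; split => //.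
Qed.
Lemma norm2 (x y : R) n :
  Rec ((Complex x y) ^+ n) ^+ 2 + Imc ((Complex x y) ^+ n) ^+ 2 = (x^+2 + y^+2) ^+ n.
Proof.
elim: n => [|n IH]; first by rewrite expr0 /= expr0n /= addr0 expr1n.
have [-> ->] := ReIm_S x y n. rewrite [(_ + _) ^+ n.+1]exprSr -IH; ring.
Qed.
Lemma absP (x y : R) n :
  `|Rec ((Complex x y) ^+ n)| <= Num.sqrt (x^+2 + y^+2) ^+ n.
Proof.
have h := norm2 x y n.
set r := Num.sqrt _. have r0 : 0 <= r by apply: sqrtr_ge0.
have hr : r ^+ 2 = x^+2 + y^+2 by rewrite sqr_sqrtr // addr_ge0 // sqr_ge0.
have : `|Rec ((Complex x y) ^+ n)| ^+ 2 <= (r ^+ n) ^+ 2.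
  by rewrite -exprM mulnC exprM hr -h real_normK ?num_real // lerDl sqr_ge0.
by move=> H; rewrite -(ler_pXn2r (n:=2)) ?nnegrE ?normr_ge0 ?exprn_ge0.
Qed.
Lemma absQ (x y : R) n :
  `|Imc ((Complex x y) ^+ n)| * Num.sqrt (x^+2 + y^+2) <= n%:R * Num.sqrt (x^+2 + y^+2) ^+ n * `|y|.
Proof.
set r := Num.sqrt _. have r0 : 0 <= r by apply: sqrtr_ge0.
have hr : r ^+ 2 = x^+2 + y^+2 by rewrite sqr_sqrtr // addr_ge0 // sqr_ge0.
have hx : `|x| <= r.
  rewrite -(ler_pXn2r (n:=2)) // ?nnegrE // real_normK ?num_real // hr lerDl sqr_ge0 //.
elim: n => [|n IH]; first by rewrite expr0 /= normr0 mul0r mul0r mul0r.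
have [_ ->] := ReIm_S x y n.
have hP := absP x y n. fold r in hP.
have hn : 0 <= `|Imc (Complex x y ^+ n)| := normr_ge0 _.
have hy : 0 <= `|y| := normr_ge0 _.
have t : `|Rec (Complex x y ^+ n) * y + Imc (Complex x y ^+ n) * x| <=
   `|Rec (Complex x y ^+ n)| * `|y| + `|Imc (Complex x y ^+ n)| * `|x|.
  by rewrite -!normrM ler_normD.
rewrite exprS mulrS.
have h1 : `|Rec (Complex x y ^+ n)| * `|y| * r <= r ^+ n * `|y| * r.
  by rewrite ler_wpM2r // ler_wpM2r.
have h2 : `|Imc (Complex x y ^+ n)| * `|x| * r <= `|Imc (Complex x y ^+ n)| * r * r.
  by rewrite -mulrA -[X in _ <= X]mulrA ler_wpM2l // ler_wpM2r.
have h3 : `|Imc (Complex x y ^+ n)| * r * r <= n%:R * r ^+ n * `|y| * r.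
  by rewrite ler_wpM2r.
have e : ((1 + n%:R) * (r * r ^+ n) * `|y|) = r ^+ n * `|y| * r + n%:R * r ^+ n * `|y| * r by ring.
rewrite e.
apply: le_trans (ler_wpM2r r0 t) _.
rewrite mulrDl. apply: lerD => //. exact: le_trans h2 h3.
Qed.
End S.
Lemma cpowR (R : rcfType) (c : R) n : Complex c 0 ^+ n = Complex (c ^+ n) 0.
Proof.
elim: n => [|n IH] //; rewrite exprS IH exprS /=; congr Complex; ring.
Qed.
Lemma cnat (R : rcfType) n : (n%:R : R[i]) = Complex n%:R 0.
Proof. by move: (ReIm_nat R n); case: (n%:R : R[i]) => ? ? /= [-> ->]. Qed.

Local Open Scope complex_scope.

Theorem mainTheorem15 (R : rcfType) (s : nat) (hs : (2 <= s)%N)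
  (a : R[i]) (ha : psi s a = 0) (hneg : ~ (a < 0)) :
  `|a| < (s.-1)%:R.
Proof.
case: s hs ha => [|[|k]] // _ ha.
case: a ha hneg => x y ha hneg.
rewrite /psi in ha. change ((k.+2).-1) with k.+1 in ha |- * .
set m := k.+1 in ha *.
have ez : Complex x y ^+ m = Complex (Rec (Complex x y ^+ m)) (Imc (Complex x y ^+ m)).
  by case: (Complex x y ^+ m).
set P := Rec (Complex x y ^+ m) in ez *.
set Q := Imc (Complex x y ^+ m) in ez *.
set M : R := m%:R ^+ m.
have hk2 : (k.+2)%:R = m%:R + 1 :> R by rewrite -natr1.
set u := x + (k.+2)%:R.
rewrite ez !cnat cpowR in ha.
have hre : P * u - Q * y - M = 0.
  by move: (congr1 (@complex.Re R) ha) => /= h; rewrite -[RHS]h /u /M /m; ring.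
have him : P * y + Q * u = 0.
  by move: (congr1 (@complex.Im R) ha) => /= h; rewrite -[RHS]h /u /M /m; ring.
have E1 : (P ^+ 2 + Q ^+ 2) * u = M * P.
  have e : (P ^+ 2 + Q ^+ 2) * u - M * P = P * (P * u - Q * y - M) + Q * (P * y + Q * u) by ring.
  by apply/eqP; rewrite -subr_eq0 e hre him mulr0 mulr0 addr0.
have E2 : (P ^+ 2 + Q ^+ 2) * y = - M * Q.
  have e : (P ^+ 2 + Q ^+ 2) * y - - M * Q = P * (P * y + Q * u) - Q * (P * u - Q * y - M) by ring.
  by apply/eqP; rewrite -subr_eq0 e hre him mulr0 mulr0 subr0.
have hN := norm2 R x y m. rewrite -/P -/Q in hN.
have hP := absP R x y m. rewrite -/P in hP.
have hQ := absQ R x y m. rewrite -/Q in hQ.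
set r := Num.sqrt (x ^+ 2 + y ^+ 2) in hP hQ *.
have r0 : 0 <= r by apply: sqrtr_ge0.
have hr : r ^+ 2 = x^+2 + y^+2 by rewrite sqr_sqrtr // addr_ge0 // sqr_ge0.
have hN' : P ^+ 2 + Q ^+ 2 = (r ^+ m) ^+ 2 by rewrite hN -hr -!exprM mulnC.
rewrite complex.normc_def /= -/r cnat complex.ltcE /= eqxx /=.
rewrite ltNge; apply/negP => hrm.
have m0 : 0 < m%:R :> R by rewrite ltr0n.
have rm0 : 0 < r ^+ m by rewrite exprn_gt0 // (lt_le_trans m0 hrm).
have M0 : 0 < M by rewrite exprn_gt0.
have Mr : M <= r ^+ m by rewrite /M lerXn2r // nnegrE ltW.
have hu : u <= 1.
  have h1 : (r ^+ m) * ((r ^+ m) * u) <= (r ^+ m) * (r ^+ m).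
    rewrite mulrA -expr2 -hN' E1.
    apply: (le_trans (ler_wpM2l (ltW M0) (real_ler_norm (num_real P)))).
    apply: le_trans (ler_wpM2l (ltW M0) hP) _.
    by rewrite hN' expr2 ler_wpM2r // ltW.
  rewrite ler_pM2l // in h1.
  by rewrite -(ler_pM2l rm0) mulr1.
have hx : x <= - m%:R by move: hu; rewrite /u hk2; lra.
have [y0|yn0] := eqVneq y 0.
  apply: hneg; rewrite complex.ltcE /= y0 eqxx /=; lra.
have ya : 0 < `|y| by rewrite normr_gt0.
have h2 : (r ^+ m) * (r ^+ m * r) * `|y| <= (r ^+ m) * (M * m%:R) * `|y|.
  have e : (r ^+ m) * (r ^+ m * r) * `|y| = M * (`|Q| * r).
    have : `|(P ^+ 2 + Q ^+ 2) * y| = `|- M * Q| by rewrite E2.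
    rewrite !normrM normrN hN' (ger0_norm (ltW M0)) ger0_norm ?exprn_ge0 // ?ltW //.
    move=> h; transitivity (r ^+ m ^+ 2 * `|y| * r); [ring | rewrite h; ring].
  rewrite e; apply: le_trans (ler_wpM2l (ltW M0) hQ) _.
  rewrite le_eqVlt; apply/orP; left; apply/eqP; ring.
rewrite ler_pM2r // ler_pM2l // -exprSr in h2.
have h3 : r <= m%:R.
  by rewrite -(ler_pXn2r (n := m.+1)) // ?nnegrE ?(ltW m0) // [m%:R ^+ m.+1]exprSr.
have hrm' : r = m%:R by apply: le_anti; rewrite h3 hrm.
have : y ^+ 2 > 0 by rewrite exprn_even_gt0 // yn0.
move: hr; rewrite hrm'; nra.
Qed.
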